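(* Let $n\ge1$. Let $\mathbf{R}$ be a subalgebra of $\mathbf{P\L}_n\times\mathbf{P\L}_n$ with $\mathbf{R}\subseteq{\le}$. Assume $\mathbf{R}$ is not the diagonal of a subalgebra of $\mathbf{P\L}_n$. Let $\mathbf{S}=\mathrm{pr}_1(\mathbf{R})\times\mathrm{pr}_2(\mathbf{R})=\mathbf{P\L}_k\times\mathbf{P\L}_{k'}$, where $k,k'$ are divisors of $n$. Then there exists $\overline{\mathbf{R}}\in\mathcal{S}_n$ with $\mathbf{R}=\overline{\mathbf{R}}\cap\mathbf{S}$.
   Context: For $n\ge 1$, the algebra $\mathbf{P\L}_n=\langle\{0,\tfrac1n,\dots,\tfrac{n-1}{n},1\},\wedge,\vee,\odot,\oplus,0,1\rangle$ has $\wedge=\min$, $\vee=\max$, $x\odot y=\max\{0,x+y-1\}$ and $x\oplus y=\min\{1,x+y\}$. For a divisor $k$ of $n$, $\mathbf{P\L}_k$ is the subalgebra with universe $\{\tfrac ik:0\le i\le k\}$. The relations are ${\le}=\{(x,y): x\le y\}$ and $\lhd=\{(x,y):x=0\text{ or }y=1\}$. The set $\mathcal{S}_n$ is the collection of all subalgebras $\mathbf{R}$ of $\mathbf{P\L}_n\times\mathbf{P\L}_n$ with $\lhd\subseteq\mathbf{R}\subseteq{\le}$. *)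

(* Defs.v *)
(* The element i/n of PL_n is represented by its numerator
   i : 'I_n.+1 (so 0 is ord0 and 1 is ord_max, i.e. numerator n). *)
From mathcomp Require Import all_boot.
Set Implicit Arguments. Unset Strict Implicit. Unset Printing Implicit Defensive.

Section PL.
Variable n : nat.
Definition PL := 'I_n.+1.

Definition pl0 : PL := ord0.
Definition pl1 : PL := ord_max.
Definition pl_meet (x y : PL) : PL := inord (minn x y).
Definition pl_join (x y : PL) : PL := inord (maxn x y).
(* x (.) y = max(0, x+y-1): numerators (x+y) - n (truncated) *)
Definition pl_odot (x y : PL) : PL := inord ((x + y) - n).
(* x (+) y = min(1, x+y): numerators min(n, x+y) *)
Definition pl_oplus (x y : PL) : PL := inord (minn n (x + y)).

Definition subalg (A : {set PL}) : Prop :=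
  [/\ pl0 \in A, pl1 \in A &
      forall x y, x \in A -> y \in A ->
        [/\ pl_meet x y \in A, pl_join x y \in A,
            pl_odot x y \in A & pl_oplus x y \in A]].

Definition pair_op (f : PL -> PL -> PL) (p q : PL * PL) : PL * PL :=
  (f p.1 q.1, f p.2 q.2).

Definition subalg2 (R : {set PL * PL}) : Prop :=
  [/\ (pl0, pl0) \in R, (pl1, pl1) \in R &
      forall p q, p \in R -> q \in R ->
        [/\ pair_op pl_meet p q \in R, pair_op pl_join p q \in R,
            pair_op pl_odot p q \in R & pair_op pl_oplus p q \in R]].

Definition pl_le : {set PL * PL} := [set p : PL * PL | (p.1 : nat) <= p.2].
Definition pl_lhd : {set PL * PL} := [set p : PL * PL | (p.1 == pl0) || (p.2 == pl1)].

Definition Scal (R : {set PL * PL}) : Prop :=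
  subalg2 R /\ pl_lhd \subset R /\ R \subset pl_le.

Definition diag (A : {set PL}) : {set PL * PL} := [set (a, a) | a in A].

Definition pr1 (R : {set PL * PL}) : {set PL} := [set p.1 | p in R].
Definition pr2 (R : {set PL * PL}) : {set PL} := [set p.2 | p in R].
End PL.

(* Main.v *)
Require Import Defs.
From mathcomp Require Import all_boot.
From mathcomp Require Import zify.

Lemma plv (n k : nat) : k <= n -> nat_of_ord (inord k : PL n) = k.
Proof. by move=> hk; rewrite inordK. Qed.

Lemma meetE n (x y : PL n) : nat_of_ord (pl_meet x y) = minn x y.
Proof. rewrite /pl_meet plv //; have := ltn_ord x; have := ltn_ord y; lia. Qed.
Lemma joinE n (x y : PL n) : nat_of_ord (pl_join x y) = maxn x y.
Proof. rewrite /pl_join plv //; have := ltn_ord x; have := ltn_ord y; lia. Qed.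
Lemma odotE n (x y : PL n) : nat_of_ord (pl_odot x y) = (x + y) - n.
Proof. rewrite /pl_odot plv //; have := ltn_ord x; have := ltn_ord y; lia. Qed.
Lemma oplusE n (x y : PL n) : nat_of_ord (pl_oplus x y) = minn n (x + y).
Proof. rewrite /pl_oplus plv //; lia. Qed.
Lemma pl0E n : nat_of_ord (pl0 n) = 0. Proof. by []. Qed.
Lemma pl1E n : nat_of_ord (pl1 n) = n. Proof. by []. Qed.

Lemma pair_eqv n (p q : PL n * PL n) :
  nat_of_ord p.1 = q.1 -> nat_of_ord p.2 = q.2 -> p = q.
Proof.
case: p q => [a b] [c d] /= h1 h2.
by rewrite (val_inj h1) (val_inj h2).
Qed.

Lemma get01 n (R : {set PL n * PL n}) : subalg2 R ->
  forall d (p : PL n * PL n), p \in R -> (nat_of_ord p.1 < p.2) ->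
   n - (p.2 - p.1) <= d -> (pl0 n, pl1 n) \in R.
Proof.
case=> H0 H1 Hop; elim=> [|d IH] p Hp hlt hd.
  have hp2 := ltn_ord p.2.
  have -> : (pl0 n, pl1 n) = p by apply: pair_eqv; rewrite /= ?pl0E ?pl1E; lia.
  done.
have ha := ltn_ord p.1; have hb := ltn_ord p.2.
have [hs|hs|hs] := ltngtP (p.1 + p.2) n.
- have [_ _ _ Hq] := Hop p p Hp Hp.
  apply: (IH _ Hq); rewrite /= !oplusE; lia.
- have [_ _ Hq _] := Hop p p Hp Hp.
  apply: (IH _ Hq); rewrite /= !odotE; lia.
- have [ha0|ha0] := posnP p.1.
    have -> : (pl0 n, pl1 n) = p by apply: pair_eqv; rewrite /= ?pl0E ?pl1E; lia.
    done.
  have [_ _ _ Hq] := Hop p p Hp Hp.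
  have [_ _ Hr _] := Hop _ _ Hq Hq.
  apply: (IH _ Hr); rewrite /= !odotE /= !oplusE; lia.
Qed.

Lemma meet_mono n (x y x' y' : PL n) : nat_of_ord x <= x' -> nat_of_ord y <= y' ->
  nat_of_ord (pl_meet x y) <= pl_meet x' y'.
Proof. rewrite !meetE; lia. Qed.
Lemma join_mono n (x y x' y' : PL n) : nat_of_ord x <= x' -> nat_of_ord y <= y' ->
  nat_of_ord (pl_join x y) <= pl_join x' y'.
Proof. rewrite !joinE; lia. Qed.
Lemma odot_mono n (x y x' y' : PL n) : nat_of_ord x <= x' -> nat_of_ord y <= y' ->
  nat_of_ord (pl_odot x y) <= pl_odot x' y'.
Proof. rewrite !odotE; lia. Qed.
Lemma oplus_mono n (x y x' y' : PL n) : nat_of_ord x <= x' -> nat_of_ord y <= y' ->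
  nat_of_ord (pl_oplus x y) <= pl_oplus x' y'.
Proof. rewrite !oplusE; lia. Qed.

Lemma L1 n a b c : a < n.+1 -> c < n.+1 -> a <= b -> a = maxn (minn (minn n (a+0)) b) (c+0-n).
Proof. lia. Qed.
Lemma L2 n a b c : c < n.+1 -> b <= c -> c = maxn (minn (minn n (a + n)) b) (c+n-n).
Proof. lia. Qed.

Theorem lemma3p14 (n : nat) (R : {set PL n * PL n}) :
  0 < n ->
  subalg2 R ->
  R \subset pl_le n ->
  ~ (exists A : {set PL n}, subalg A /\ R = diag A) ->
  exists Rbar : {set PL n * PL n},
    Scal Rbar /\ R = Rbar :&: setX (pr1 R) (pr2 R).
Proof.
move=> n0 HR Hle Hnd.
have Hle' : forall p, p \in R -> nat_of_ord p.1 <= p.2.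
  by move=> p Hp; have := subsetP Hle p Hp; rewrite inE.
have [p Hp hne] : exists2 p, p \in R & nat_of_ord p.1 != p.2.
  case: (boolP [exists p in R, nat_of_ord p.1 != p.2]).
    by case/existsP => p /andP [Hp hn]; exists p.
  move=> hall; exfalso; apply: Hnd.
  have Hd : forall p, p \in R -> p.1 = p.2.
    move=> p Hp; apply/val_inj/eqP; apply/negPn/negP => hn; move/negP: hall; apply.
    by apply/existsP; exists p; rewrite Hp hn.
  case: HR => H0 H1 Hop.
  exists (pr1 R); split.
    split; first by apply/imsetP; exists (pl0 n, pl0 n).
      by apply/imsetP; exists (pl1 n, pl1 n).
    move=> x y /imsetP [q Hq ->] /imsetP [r Hr ->].
    have [h1 h2 h3 h4] := Hop q r Hq Hr.
    by split; apply/imsetP; [exists (pair_op (@pl_meet n) q r)|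
      exists (pair_op (@pl_join n) q r)|exists (pair_op (@pl_odot n) q r)|
      exists (pair_op (@pl_oplus n) q r)].
  apply/setP => q; apply/idP/idP.
    move=> Hq; apply/imsetP; exists q.1; first by apply/imsetP; exists q.
    by case: q Hq Hd => a b Hq Hd; move: (Hd _ Hq) => /= ->.
  case/imsetP => a /imsetP [r Hr ->] ->.
  case: r Hr Hd => x y Hr Hd; move: (Hd _ Hr) => /= exy; subst y. by [].
have hlt : nat_of_ord p.1 < p.2 by have := Hle' p Hp; lia.
have H01 := @get01 n R HR _ p Hp hlt (leqnn _).
case: (HR) => H0 H1 Hop.
pose Rb := [set q : PL n * PL n |
  [exists p in R, (nat_of_ord q.1 <= p.1) && (nat_of_ord p.2 <= q.2)]].
have mono : forall (f : PL n -> PL n -> PL n) q r q' r',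
   (forall x y x' y' : PL n, nat_of_ord x <= x' -> nat_of_ord y <= y' ->
       nat_of_ord (f x y) <= f x' y') ->
   q \in Rb -> r \in Rb -> q' \in R -> r' \in R ->
   nat_of_ord q.1 <= q'.1 -> nat_of_ord q'.2 <= q.2 ->
   nat_of_ord r.1 <= r'.1 -> nat_of_ord r'.2 <= r.2 ->
   pair_op f q' r' \in R -> pair_op f q r \in Rb.
  move=> f q r q' r' Hf _ _ _ _ a1 a2 a3 a4 Hin.
  rewrite inE; apply/existsP; exists (pair_op f q' r'); rewrite Hin /=.
  by rewrite !Hf.
exists Rb; split; [split; [|split]|].
- split.
  + rewrite inE; apply/existsP; exists (pl0 n, pl0 n); by rewrite H0 /= !leqnn.
  + rewrite inE; apply/existsP; exists (pl1 n, pl1 n); by rewrite H1 /= !leqnn.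
  move=> q r Hq Hr.
  have := Hq; rewrite inE => /existsP [q' /andP [Hq' /andP [a1 a2]]].
  have := Hr; rewrite inE => /existsP [r' /andP [Hr' /andP [a3 a4]]].
  have [h1 h2 h3 h4] := Hop q' r' Hq' Hr'.
  split.
  + apply: (mono (@pl_meet n) q r q' r') => //; exact: meet_mono.
  + apply: (mono (@pl_join n) q r q' r') => //; exact: join_mono.
  + apply: (mono (@pl_odot n) q r q' r') => //; exact: odot_mono.
  + apply: (mono (@pl_oplus n) q r q' r') => //; exact: oplus_mono.
- apply/subsetP => q; rewrite !inE => /orP [] /eqP hq; apply/existsP.
    exists (pl0 n, pl0 n); by rewrite H0 /= hq pl0E.
  exists (pl1 n, pl1 n); by rewrite H1 /= hq pl1E leqnn -ltnS ltn_ord.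
- apply/subsetP => q; rewrite !inE => /existsP [q' /andP [Hq' /andP [a1 a2]]].
  have := Hle' _ Hq'; lia.
apply/setP => q; rewrite !inE; apply/idP/idP.
  move=> Hq; apply/andP; split.
    by apply/existsP; exists q; rewrite Hq !leqnn.
  by apply/andP; split; apply/imsetP; exists q.
case/andP => /existsP [q' /andP [Hq' /andP [a1 a2]]] /andP
  [/imsetP [r Hr e1] /imsetP [s Hs e2]].
have [_ _ _ h1] := Hop _ _ Hr H01.
have [h2 _ _ _] := Hop _ _ h1 Hq'.
have [_ _ h3 _] := Hop _ _ Hs H01.
have [_ h4 _ _] := Hop _ _ h2 h3.
suff -> : q = pair_op (@pl_join n) (pair_op (@pl_meet n)
   (pair_op (@pl_oplus n) r (pl0 n, pl1 n)) q') (pair_op (@pl_odot n) s (pl0 n, pl1 n)) by [].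
have b1 := ltn_ord r.1; have b2 := ltn_ord r.2; have b3 := ltn_ord s.1;
have b4 := ltn_ord s.2; have b5 := ltn_ord q'.2.
move: a1 a2; rewrite e1 e2 => a1 a2.
apply: pair_eqv; rewrite /= ?e1 ?e2; clear -a1 a2 b1 b2 b3 b4 b5;
  rewrite joinE meetE oplusE odotE /= ?pl0E ?pl1E; [apply: L1 | apply: L2] => //.
Qed.
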